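(* Let $\{S_d\}_{d\ge1}$ and $s$ be as follows: $S_d$ is a nonnegative concave function on density operators of a $d$-level system, vanishing on pure states, with $S_d(\rho_\mathrm{A})=s(\boldsymbol p)$ where $\boldsymbol p$ is the vector of nonzero eigenvalues of $\rho_\mathrm{A}$ in decreasing order, $s$ independent of $d$, $s(1)=0$, and $s(\boldsymbol q)\le s(\boldsymbol p)$ whenever $\boldsymbol q$ majorizes $\boldsymbol p$. Let $E^{cr}$ be defined, for any state $\rho$ of a bipartite system AB, by $$E^{cr}(\rho)=\inf_{\{P_m,|\Psi_m\rangle\}}\sum_m P_m\,S_{d}\big(\operatorname{tr}_\mathrm{B}|\Psi_m\rangle\langle\Psi_m|\big),$$ the infimum being over all ensembles of probabilities $P_m$ and pure states $|\Psi_m\rangle$ with $\sum_mP_m|\Psi_m\rangle\langle\Psi_m|=\rho$, and $d$ the dimension of A. Let A and B have Hilbert space dimensions $d$ and $d'$, let $d^*=\min\{d,d'\}$, and for $y\in[1,d^*]$ define $$f(y)\equiv\inf_{\boldsymbol p\in{\cal F}(y)}s(\boldsymbol p),$$ where ${\cal F}(y)$ is the set of $d^*$-component probability vectors $\boldsymbol p$ (entries in decreasing order, zero entries discarded when evaluating $s$) with $\big(\sum_{i=1}^{d^*}\sqrt{p_i}\big)^2=y$. Then for every state $\rho$ of AB, $$E^{cr}(\rho)\ge co(f)(x),\qquad x\equiv\max\{\|\rho^\Gamma\|,\|{\cal R}(\rho)\|\},$$ where $co(f)$ is the convex hull of $f$.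
   Context: $\|M\|=\operatorname{tr}\sqrt{MM^\dagger}$ is the trace norm. With respect to product bases $\{|i\rangle\}$ of A and $\{|k\rangle\}$ of B, the partial transpose is $\langle i|\langle k|\rho^\Gamma|j\rangle|l\rangle=\langle i|\langle l|\rho|j\rangle|k\rangle$, and the realignment ${\cal R}(\rho)$ is the operator (from the space of B-index pairs to A-index pairs) with matrix elements ${\cal R}(\rho)_{ij,kl}=\langle i|\langle k|\rho|j\rangle|l\rangle$; both trace norms are independent of the chosen product bases. The convex hull $co(f)$ of $f$ on $[1,d^*]$ is the largest convex function on $[1,d^*]$ not exceeding $f$. Majorization is in the usual sense for probability vectors padded with zeros. *)

(* Defs.v *)
From HB Require Import structures.
From mathcomp Require Import all_boot all_order all_algebra.
From mathcomp Require Import boolp classical_sets reals.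
From mathcomp Require Import complex.
From mathcomp Require mxtens.

Set Implicit Arguments.
Unset Strict Implicit.
Unset Printing Implicit Defensive.

Import Order.TTheory GRing.Theory Num.Theory.
Local Open Scope ring_scope.
Local Open Scope classical_set_scope.

Section QDefs.
Variable R : realType.
Local Notation C := R[i].

Definition toC (x : R) : C := Complex x 0.

Definition cadj m n (M : 'M[C]_(m, n)) : 'M[C]_(n, m) := (map_mx Num.conj M)^T.

(* the (multiset of) eigenvalues of a square complex matrix: a sequence of the
   roots of its characteristic polynomial, with multiplicity (chosen classically;
   such a sequence exists since C is algebraically closed, and it is unique up
   to permutation) *)
Definition spec n (A : 'M[C]_n) : seq C :=
  xget [::] [set sq : seq C | char_poly A = \prod_(z <- sq) ('X - z%:P)].

(* trace norm  ||M|| = tr sqrt(M M^dagger) = sum of square roots of the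
   (nonnegative) eigenvalues of M M^dagger *)
Definition trnorm m n (M : 'M[C]_(m, n)) : R :=
  \sum_(z <- spec (M *m cadj M)) Num.sqrt (complex.Re z).

Definition hermitian n (A : 'M[C]_n) := cadj A = A.
Definition psd n (A : 'M[C]_n) :=
  hermitian A /\ forall v : 'cV[C]_n, 0 <= (cadj v *m A *m v) ord0 ord0.
Definition density n (A : 'M[C]_n) := psd A /\ \tr A = 1.
Definition unit_vec n (psi : 'cV[C]_n) := cadj psi *m psi = 1.
Definition pure_state n (A : 'M[C]_n) :=
  density A /\ exists psi : 'cV[C]_n, unit_vec psi /\ A = psi *m cadj psi.

Definition eigvec n (A : 'M[C]_n) : seq R :=
  sort (fun x y => y <= x) [seq x <- map (@complex.Re R) (spec A) | 0 < x].

Definition probvec (p : seq R) :=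
  all (fun x => 0 < x) p /\ sorted (fun x y => y <= x) p /\ \sum_(x <- p) x = 1.

(* q majorizes p (vectors padded with zeros via nth 0) *)
Definition majorizes (q p : seq R) :=
  forall k : nat, \sum_(i < k) nth 0 p i <= \sum_(i < k) nth 0 q i.

(* Bipartite system AB = C^d (x) C^d', product basis index (i,k) |-> i*d'+k *)
Definition bidx d d' (i : 'I_d) (k : 'I_d') : 'I_(d * d') :=
  mxtens.mxtens_index (i, k).
Definition unbidx d d' (a : 'I_(d * d')) : 'I_d * 'I_d' :=
  mxtens.mxtens_unindex a.

Definition ptrB d d' (X : 'M[C]_(d * d')) : 'M[C]_d :=
  \matrix_(i, j) \sum_(k < d') X (bidx i k) (bidx j k).

Definition ptransp d d' (X : 'M[C]_(d * d')) : 'M[C]_(d * d') :=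
  \matrix_(a, b) X (bidx (unbidx a).1 (unbidx b).2) (bidx (unbidx b).1 (unbidx a).2).

Definition realign d d' (X : 'M[C]_(d * d')) : 'M[C]_(d * d, d' * d') :=
  \matrix_(a, b) X (bidx (unbidx a).1 (unbidx b).1) (bidx (unbidx a).2 (unbidx b).2).

Definition ensemble_of d d' (rho : 'M[C]_(d * d')) n (P : 'I_n -> R)
    (psi : 'I_n -> 'cV[C]_(d * d')) :=
  (forall m, 0 <= P m) /\ \sum_(m < n) P m = 1 /\ (forall m, unit_vec (psi m)) /\
  \sum_(m < n) toC (P m) *: (psi m *m cadj (psi m)) = rho.

Definition Ecr (S : forall n : nat, 'M[C]_n -> R) d d' (rho : 'M[C]_(d * d')) : R :=
  inf [set e : R | exists n (P : 'I_n -> R) (psi : 'I_n -> 'cV[C]_(d * d')),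
        ensemble_of rho P psi /\
        e = \sum_(m < n) P m * S d (@ptrB d d' (psi m *m cadj (psi m)))].

Definition Fset (ds : nat) (y : R) : set ('I_ds -> R) :=
  [set p | (forall i, 0 <= p i) /\ \sum_(i < ds) p i = 1 /\
           (forall i j : 'I_ds, (i <= j)%N -> p j <= p i) /\
           (\sum_(i < ds) Num.sqrt (p i)) ^+ 2 = y].

Definition fmin (s : seq R -> R) (ds : nat) (y : R) : R :=
  inf [set s [seq x <- [seq p i | i : 'I_ds] | 0 < x] | p in @Fset ds y].

Definition convex_on (a b : R) (g : R -> R) :=
  forall x y t, a <= x <= b -> a <= y <= b -> 0 <= t <= 1 ->
    g (t * x + (1 - t) * y) <= t * g x + (1 - t) * g y.

Definition co_hull (a b : R) (f : R -> R) (x : R) : R :=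
  sup [set g x | g in [set g : R -> R | convex_on a b g /\
                                         forall y, a <= y <= b -> g y <= f y]].

End QDefs.

Arguments ptrB {R} d d' X.
Arguments ptransp {R} d d' X.
Arguments realign {R} d d' X.
Arguments Ecr {R} S d d' rho.
Arguments Fset {R} ds y.

(* Main.v *)
Require Import Defs.
From HB Require Import structures.
From mathcomp Require Import all_boot all_order all_algebra.
From mathcomp Require Import boolp classical_sets reals.
From mathcomp Require Import complex.
From mathcomp Require Import spectral sesquilinear.
From mathcomp Require Import ring lra.

Set Implicit Arguments.
Unset Strict Implicit.
Unset Printing Implicit Defensive.

Import Order.TTheory GRing.Theory Num.Theory.
Local Open Scope ring_scope.
Section P1.
Variable R : realType.
Local Notation C := R[i].

Lemma conjE (z : C) : Num.conj z = conjc z.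
Proof. by []. Qed.

Lemma cadjE m n (M : 'M[C]_(m, n)) : cadj M = map_mx Num.conj (M ^T).
Proof. by apply/matrixP => i j; rewrite !mxE. Qed.

Lemma cadj_mul m n p (A : 'M[C]_(m, n)) (B : 'M[C]_(n, p)) :
  cadj (A *m B) = cadj B *m cadj A.
Proof. by rewrite !cadjE trmx_mul map_mxM. Qed.

Lemma cadjK m n (A : 'M[C]_(m, n)) : cadj (cadj A) = A.
Proof. by apply/matrixP => i j; rewrite !mxE /= conjE conjcK. Qed.

Lemma char_poly_sim n (U V A : 'M[C]_n) : V *m U = 1%:M ->
  char_poly (U *m A *m V) = char_poly A.
Proof.
move=> VU; have UV := mulmx1C VU.
rewrite /char_poly /char_poly_mx.
have -> : 'X%:M - map_mx polyC (U *m A *m V) =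
  map_mx polyC U *m ('X%:M - map_mx polyC A) *m map_mx polyC V.
  rewrite mulmxBr mulmxBl !map_mxM; congr (_ - _).
  rewrite scalar_mxC -mulmxA -map_mxM UV map_mx1 mulmx1 //.
rewrite !det_mulmx mulrC mulrA -det_mulmx -map_mxM VU map_mx1 det1 mul1r //.
Qed.

Lemma herm_spec n (H : 'M[C]_n) : cadj H = H ->
  exists (U : 'M[C]_n) (D : 'rV[C]_n),
    [/\ cadj U *m U = 1%:M, U *m cadj U = 1%:M & H = U *m diag_mx D *m cadj U].
Proof.
move=> hH.
have Hn : H \is normalmx.
  by apply/normalmxP; rewrite -[map_mx _ _]cadjE hH.
have := @orthomx_spectralP _ _ H; rewrite Hn => /elimT /(_ isT) HE.
have Pu := spectral_unitarymx H.
have PP : spectralmx H *m cadj (spectralmx H) = 1%:M.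
  by rewrite cadjE; apply/unitarymxP.
exists (cadj (spectralmx H)), (spectral_diag H); rewrite cadjK; split => //.
  exact: mulmx1C.
by rewrite {1}HE invmx_unitary // -[map_mx _ _]cadjE.
Qed.

Lemma char_poly_herm n (U : 'M[C]_n) (D : 'rV[C]_n) : cadj U *m U = 1%:M ->
  char_poly (U *m diag_mx D *m cadj U) = \prod_(i < n) ('X - (D 0 i)%:P).
Proof.
move=> hU; rewrite char_poly_sim // char_poly_trig; last first.
  exact/is_diag_mx_is_trig/diag_mx_is_diag.
by apply: eq_bigr => i _; rewrite mxE eqxx mulr1n.
Qed.

Lemma spec_herm n (U : 'M[C]_n) (D : 'rV[C]_n) : cadj U *m U = 1%:M ->
  perm_eq (spec (U *m diag_mx D *m cadj U)) [seq D 0 i | i <- enum 'I_n].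
Proof.
move=> hU; apply: prod_XsubC_eq.
have ex : exists sq : seq C, char_poly (U *m diag_mx D *m cadj U) =
   \prod_(z <- sq) ('X - z%:P).
  exists [seq D 0 i | i <- enum 'I_n].
  by rewrite char_poly_herm // big_map big_enum.
have := xgetPex [::] ex; rewrite /spec => <-.
by rewrite char_poly_herm // big_map big_enum.
Qed.
End P1.
Section P2.
Variable R : realType.
Local Notation C := R[i].
Definition nc (z : C) : R := complex.Re z ^+ 2 + complex.Im z ^+ 2.
Lemma nc_ge0 z : 0 <= nc z.
Proof. by rewrite /nc addr_ge0 // sqr_ge0. Qed.
Lemma ReD (x y : C) : complex.Re (x + y) = complex.Re x + complex.Re y.
Proof. by case: x; case: y. Qed.
Lemma ImD (x y : C) : complex.Im (x + y) = complex.Im x + complex.Im y.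
Proof. by case: x; case: y. Qed.
Lemma Re0 : complex.Re (0 : C) = 0. Proof. by []. Qed.
Lemma Im0 : complex.Im (0 : C) = 0. Proof. by []. Qed.
Lemma ReS (I : Type) (r : seq I) (P : pred I) (F : I -> C) :
  complex.Re (\sum_(i <- r | P i) F i) = \sum_(i <- r | P i) complex.Re (F i).
Proof. exact: (big_morph _ ReD Re0). Qed.
Lemma ImS (I : Type) (r : seq I) (P : pred I) (F : I -> C) :
  complex.Im (\sum_(i <- r | P i) F i) = \sum_(i <- r | P i) complex.Im (F i).
Proof. exact: (big_morph _ ImD Im0). Qed.
Lemma ReM (x y : C) : complex.Re (x * y) =
  complex.Re x * complex.Re y - complex.Im x * complex.Im y.
Proof. by case: x; case: y. Qed.
Lemma ImM (x y : C) : complex.Im (x * y) =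
  complex.Re x * complex.Im y + complex.Im x * complex.Re y.
Proof. case: x => a b; case: y => c d /=; ring. Qed.
Lemma Rec (z : C) : complex.Re (Num.conj z) = complex.Re z.
Proof. by case: z. Qed.
Lemma Imc (z : C) : complex.Im (Num.conj z) = - complex.Im z.
Proof. by case: z. Qed.
Lemma ReC (a : R) : complex.Re (toC a) = a. Proof. by []. Qed.
Lemma ImC (a : R) : complex.Im (toC a) = 0. Proof. by []. Qed.
Lemma toCM (a b : R) : toC (a * b) = toC a * toC b.
Proof. apply/eqP; rewrite eq_complex /= !mulr0 !mul0r subr0 addr0 !eqxx //. Qed.
Lemma toCD (a b : R) : toC (a + b) = toC a + toC b.
Proof. apply/eqP; rewrite eq_complex /= addr0 !eqxx //. Qed.
Lemma toCV (a : R) : toC (a^-1) = (toC a)^-1.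
Proof.
apply/eqP; rewrite eq_complex /=.
rewrite expr0n /= addr0 mul0r oppr0 eqxx andbT.
have [->|a0] := eqVneq a 0; first by rewrite invr0 expr0n /= mul0r.
by rewrite expr2 invfM mulrA divff // mul1r.
Qed.
Lemma mul_conj (z : C) : z * Num.conj z = toC (nc z).
Proof.
case: z => a b; apply/eqP; rewrite eq_complex /= /nc /=; apply/andP; split; apply/eqP; ring.
Qed.
Lemma Re_conjM (a b : C) : complex.Re (Num.conj a * b) <= (nc a + nc b) / 2.
Proof.
case: a => a1 a2; case: b => b1 b2; rewrite /nc /=.
have h1 := sqr_ge0 (a1 - b1); have h2 := sqr_ge0 (a2 - b2).
rewrite !expr2 in h1 h2 *. lra.
Qed.
End P2.

Section L2.
Variable R : realType.
Local Notation C := R[i].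

Definition nsq m (w : 'cV[C]_m) : R := \sum_i nc (w i 0).

Lemma toC0 : toC 0 = 0 :> C. Proof. by []. Qed.
Lemma toC_sum (I : Type) (r : seq I) (P : pred I) (F : I -> R) :
  toC (\sum_(i <- r | P i) F i) = \sum_(i <- r | P i) toC (F i).
Proof. exact: (big_morph _ (@toCD R) toC0). Qed.

Lemma toC_inj (a b : R) : toC a = toC b -> a = b.
Proof. by case. Qed.

Lemma nsqE m (w : 'cV[C]_m) : (cadj w *m w) 0 0 = toC (nsq w).
Proof.
rewrite !mxE /nsq toC_sum; apply: eq_bigr => j _.
by rewrite !mxE mulrC mul_conj.
Qed.

Lemma nsq_ge0 m (w : 'cV[C]_m) : 0 <= nsq w.
Proof. by apply: sumr_ge0 => i _; apply: nc_ge0. Qed.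

Lemma Re_dot m (v y : 'cV[C]_m) :
  complex.Re ((cadj v *m y) 0 0) <= (nsq v + nsq y) / 2.
Proof.
rewrite !mxE ReS /nsq -big_split /= mulr_suml; apply: ler_sum => j _.
by rewrite !mxE; apply: Re_conjM.
Qed.

Lemma Re_toCM (a : R) (z : C) : complex.Re (toC a * z) = a * complex.Re z.
Proof. by rewrite ReM ReC ImC mul0r subr0. Qed.

Lemma conj_toC (a : R) : Num.conj (toC a) = toC a.
Proof. by rewrite conjE /= oppr0. Qed.

Lemma trnorm_le m n (I : finType) (X : 'M[C]_(m, n)) (c : I -> R)
  (u : I -> 'cV[C]_m) (v : I -> 'cV[C]_n) :
  (forall k, 0 <= c k) -> (forall k, nsq (u k) <= 1) -> (forall k, nsq (v k) <= 1) ->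
  X = \sum_k toC (c k) *: (u k *m cadj (v k)) -> trnorm X <= \sum_k c k.
Proof.
move=> c0 u1 v1 XE.
pose H := X *m cadj X.
have hH : cadj H = H by rewrite /H cadj_mul cadjK.
have [U [D [UU1 UU2 HE]]] := herm_spec hH.
have [N NE] : {N | N = cadj U *m X} by exists (cadj U *m X).
have NN : N *m cadj N = diag_mx D.
  rewrite NE cadj_mul cadjK !mulmxA -(mulmxA _ X) -/H HE !mulmxA UU1 mul1mx.
  by rewrite -mulmxA UU1 mulmx1.
pose r i := \sum_j nc (N i j).
have Dr i : D 0 i = toC (r i).
  have := congr1 (fun M : 'M[C]_m => M i i) NN; rewrite !mxE eqxx mulr1n => <-.
  by rewrite toC_sum; apply: eq_bigr => j _; rewrite !mxE mul_conj.
have Dn i i' : i != i' -> \sum_j N i j * Num.conj (N i' j) = 0.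
  move=> ii; transitivity ((N *m cadj N) i i').
    by rewrite !mxE; apply: eq_bigr => j _; rewrite !mxE.
  by rewrite NN mxE (negPf ii) mulr0n.
have r0 i : 0 <= r i by apply: sumr_ge0 => j _; apply: nc_ge0.
have trE : trnorm X = \sum_i Num.sqrt (r i).
  rewrite /trnorm -/H HE (perm_big _ (spec_herm D UU1)) big_map big_enum /=.
  by apply: eq_bigr => i _; rewrite Dr ReC.
pose sq i := Num.sqrt (r i).
pose W : 'M[C]_(n, m) := \matrix_(j, i) (Num.conj (N i j) * toC (sq i)^-1).
have step1 : \sum_i sq i = complex.Re (\tr (N *m W)).
  rewrite /mxtrace ReS; apply: eq_bigr => i _; rewrite mxE ReS.
  under eq_bigr => j _ do rewrite mxE mulrA mul_conj -toCM ReC.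
  rewrite -mulr_suml -/(r i) /sq.
  have [->|rn0] := eqVneq (r i) 0; first by rewrite sqrtr0 mul0r.
  have sn0 : Num.sqrt (r i) != 0 by rewrite sqrtr_eq0 -ltNge lt_neqAle eq_sym rn0 r0.
  by rewrite -[X in X * _](sqr_sqrtr (r0 i)) expr2 mulfK.
have step2 : \tr (N *m W) =
    \sum_k toC (c k) * (cadj (v k) *m ((W *m cadj U) *m u k)) 0 0.
  rewrite NE -mulmxA mxtrace_mulC -mulmxA XE mulmx_suml raddf_sum /=.
  apply: eq_bigr => k _.
  rewrite -scalemxAl mxtraceZ; congr (_ * _); rewrite -trace_mx11 mxtrace_mulC !mulmxA.
  by rewrite mxtrace_mulC !mulmxA.
have WW : cadj W *m W = diag_mx (\row_i toC (r i / sq i ^+ 2)).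
  apply/matrixP => i i'; rewrite !mxE.
  transitivity ((\sum_j N i j * Num.conj (N i' j)) * (toC (sq i)^-1 * toC (sq i')^-1)).
    rewrite mulr_suml; apply: eq_bigr => j _; rewrite !mxE.
    rewrite rmorphM /= conjCK conj_toC; ring.
  have [<-|ii] := eqVneq i i'; last by rewrite Dn // mul0r mulr0n.
  rewrite mulr1n; transitivity (D 0 i * (toC (sq i)^-1 * toC (sq i)^-1)).
    rewrite Dr toC_sum; congr (_ * _); apply: eq_bigr => j _.
    by rewrite mul_conj.
  by rewrite Dr -!toCM mulrA expr2 invfM mulrA.
have contr (a : 'cV[C]_m) : nsq (W *m a) <= nsq a.
  have : toC (nsq (W *m a)) = (cadj a *m (cadj W *m W) *m a) 0 0.
    by rewrite -nsqE cadj_mul !mulmxA.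
  rewrite WW mul_mx_diag !mxE.
  under eq_bigr => j _ do rewrite !mxE.
  move=> /(congr1 (@complex.Re R)); rewrite ReC ReS => ->.
  rewrite /nsq; apply: ler_sum => j _.
  rewrite mulrC mulrA mulrC mul_conj -toCM ReC.
  have e1 : r j / sq j ^+ 2 <= 1.
    rewrite /sq sqr_sqrtr //.
    have [->|rn0] := eqVneq (r j) 0; first by rewrite mul0r.
    by rewrite divff.
  have e0 : 0 <= r j / sq j ^+ 2 by rewrite divr_ge0 // sqr_ge0.
  by rewrite ler_piMl ?nc_ge0.
have Uiso (a : 'cV[C]_m) : nsq (cadj U *m a) = nsq a.
  apply: toC_inj; rewrite -!nsqE cadj_mul cadjK !mulmxA -(mulmxA _ U) UU2 mulmx1 //.
rewrite trE -/sq step1 step2 ReS.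
apply: ler_sum => k _; rewrite Re_toCM.
rewrite -[leRHS]mulr1; apply: ler_wpM2l => //.
apply: le_trans (Re_dot _ _) _.
rewrite -mulmxA.
have := contr (cadj U *m u k); rewrite Uiso => h.
have := u1 k; have := v1 k; lra.
Qed.
End L2.

Section L3.
Variable R : realType.
Local Notation C := R[i].

Lemma nc_mul (x y : C) : nc (x * y) = nc x * nc y.
Proof. case: x => a b; case: y => c e; rewrite /nc /=; ring. Qed.
Lemma nc_conj (x : C) : nc (Num.conj x) = nc x.
Proof. case: x => a b; rewrite /nc /=; ring. Qed.
Lemma nc_toC (r : R) : nc (toC r) = r ^+ 2.
Proof. rewrite /nc /=; ring. Qed.
Lemma nc_eq0 (x : C) : nc x = 0 -> x = 0.
Proof.
case: x => a b; rewrite /nc /= => h.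
have ha : a ^+ 2 = 0.
  apply/eqP; rewrite eq_le sqr_ge0 andbT -h lerDl sqr_ge0 //.
have hb : b ^+ 2 = 0 by move: h; rewrite ha add0r.
by move/eqP: ha; rewrite sqrf_eq0 => /eqP->; move/eqP: hb; rewrite sqrf_eq0 => /eqP->.
Qed.

Lemma gram_diag m n (N : 'M[C]_(m, n)) (D : 'rV[C]_m) :
  N *m cadj N = diag_mx D -> forall i, D 0 i = toC (\sum_j nc (N i j)).
Proof.
move=> NN i.
have := congr1 (fun M : 'M[C]_m => M i i) NN; rewrite !mxE eqxx mulr1n => <-.
by rewrite toC_sum; apply: eq_bigr => j _; rewrite !mxE mul_conj.
Qed.

Definition psimat d d' (psi : 'cV[C]_(d * d')) : 'M[C]_(d, d') :=
  \matrix_(i, k) psi (bidx i k) 0.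

Lemma ptrB_pure d d' (psi : 'cV[C]_(d * d')) :
  ptrB d d' (psi *m cadj psi) = psimat psi *m cadj (psimat psi).
Proof.
apply/matrixP => i j; rewrite !mxE; apply: eq_bigr => k _.
by rewrite !mxE big_ord1 !mxE.
Qed.

Lemma pure_decomp d d' (psi : 'cV[C]_(d * d')) :
  exists (U : 'M[C]_d) (sq : 'I_d -> R) (be : 'I_d -> 'cV[C]_d'),
  [/\ cadj U *m U = 1%:M, U *m cadj U = 1%:M,
      [/\ forall a, 0 <= sq a, forall a, nsq (be a) <= 1 &
          (#|[set a | sq a != 0%R]| <= d')%N],
      (forall i k, psi (bidx i k) 0 = \sum_a U i a * toC (sq a) * be a k 0) &
      ptrB d d' (psi *m cadj psi) = U *m diag_mx (\row_a toC (sq a ^+ 2)) *m cadj U].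
Proof.
set P := psimat psi.
pose G := P *m cadj P.
have hG : cadj G = G by rewrite /G cadj_mul cadjK.
have [U [D [UU1 UU2 GE]]] := herm_spec hG.
have [N NE] : {N | N = cadj U *m P} by exists (cadj U *m P).
have NN : N *m cadj N = diag_mx D.
  rewrite NE cadj_mul cadjK !mulmxA -(mulmxA _ P) -/G GE !mulmxA UU1 mul1mx.
  by rewrite -mulmxA UU1 mulmx1.
pose la a := \sum_k nc (N a k).
have la0 a : 0 <= la a by apply: sumr_ge0 => k _; apply: nc_ge0.
pose sq a := Num.sqrt (la a).
have sq0 a : 0 <= sq a by apply: sqrtr_ge0.
have sq2 a : sq a ^+ 2 = la a by rewrite sqr_sqrtr.
pose be a : 'cV[C]_d' := \col_k (N a k * toC (sq a)^-1).
exists U, sq, be; split => //.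
- split => //; last first.
    set S := [set a | sq a != 0].
    pose M := rowsub (@enum_val _ (mem S)) N.
    have MM : M *m cadj M = diag_mx (\row_t D 0 (@enum_val _ (mem S) t)).
      apply/matrixP => t t'.
      transitivity ((N *m cadj N) (enum_val t) (enum_val t')).
        by rewrite !mxE; apply: eq_bigr => j _; rewrite !mxE.
      by rewrite NN !mxE (inj_eq enum_val_inj).
    have Mu : M *m cadj M \in unitmx.
      rewrite MM unitmxE det_diag unitfE; apply/prodf_neq0 => t _.
      rewrite mxE (gram_diag NN) -/(la _).
      have := enum_valP t; rewrite inE /sq.
      by apply: contra => /eqP [] ->; rewrite sqrtr0.
    by rewrite -(mxrank_unit Mu); apply: leq_trans (mxrankM_maxl _ _) (rank_leq_col _).
  move=> a; rewrite /nsq.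
  under eq_bigr => k _ do rewrite mxE nc_mul nc_toC.
  rewrite -mulr_suml -/(la a) -sq2 exprVn.
  have [->|sn0] := eqVneq (sq a) 0; first by rewrite expr0n /= invr0 mulr0.
  by rewrite divff // expf_neq0.
- move=> i k.
  have PE : P = U *m N by rewrite NE mulmxA UU2 mul1mx.
  have -> : psi (bidx i k) 0 = P i k by rewrite mxE.
  rewrite PE mxE; apply: eq_bigr => a _; rewrite mxE -mulrA; congr (_ * _).
  have [sa0|sn0] := eqVneq (sq a) 0.
    have : la a = 0 by rewrite -sq2 sa0 expr0n.
    move/eqP; rewrite psumr_eq0; last by move=> *; apply: nc_ge0.
    move/allP => /(_ k (mem_index_enum _)) /implyP /(_ isT) /eqP /nc_eq0 ->.
    by rewrite sa0 mul0r.
  rewrite [RHS]mulrC -[RHS]mulrA -toCM mulVf // mulr1 //.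
- rewrite ptrB_pure -/P -/G GE; congr (_ *m diag_mx _ *m _).
  apply/matrixP => i a; rewrite !mxE ord1 (gram_diag NN) sq2 //.
Qed.
End L3.

Section L4.
Variable R : realType.
Local Notation C := R[i].

Definition prodv p q (x : 'cV[C]_p) (y : 'cV[C]_q) : 'cV[C]_(p * q) :=
  \col_a (x (unbidx a).1 0 * y (unbidx a).2 0).
Definition conjv p (x : 'cV[C]_p) : 'cV[C]_p := map_mx Num.conj x.

Lemma nsq_prodv p q (x : 'cV[C]_p) (y : 'cV[C]_q) :
  nsq (prodv x y) = nsq x * nsq y.
Proof.
rewrite /nsq mxtens.mulr_sum; apply: eq_bigr => a _.
by rewrite mxE nc_mul.
Qed.

Lemma nsq_conjv p (x : 'cV[C]_p) : nsq (conjv x) = nsq x.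
Proof. by apply: eq_bigr => a _; rewrite mxE nc_conj. Qed.

Lemma nsq_colU p (U : 'M[C]_p) a : cadj U *m U = 1%:M -> nsq (col a U) = 1.
Proof.
move=> hU; apply: toC_inj; rewrite -nsqE.
transitivity ((cadj U *m U) a a).
  by rewrite !mxE; apply: eq_bigr => j _; rewrite !mxE.
by rewrite hU mxE eqxx.
Qed.

Lemma unbidxK d d' (i : 'I_d) (k : 'I_d') : unbidx (bidx i k) = (i, k).
Proof. exact: mxtens.mxtens_indexK. Qed.

Lemma conj_sum (I : Type) (r : seq I) (P : pred I) (F : I -> C) :
  Num.conj (\sum_(i <- r | P i) F i) = \sum_(i <- r | P i) Num.conj (F i).
Proof. exact: rmorph_sum. Qed.

Lemma ptransp_pure d d' (psi : 'cV[C]_(d * d')) (U : 'M[C]_d) (sq : 'I_d -> R)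
  (be : 'I_d -> 'cV[C]_d') :
  (forall i k, psi (bidx i k) 0 = \sum_a U i a * toC (sq a) * be a k 0) ->
  ptransp d d' (psi *m cadj psi) =
  \sum_(p : 'I_d * 'I_d) toC (sq p.1 * sq p.2) *:
     (prodv (col p.1 U) (conjv (be p.2)) *m cadj (prodv (col p.2 U) (conjv (be p.1)))).
Proof.
move=> hpsi; apply/matrixP => x y.
rewrite -[x]mxtens.mxtens_unindexK -[y]mxtens.mxtens_unindexK.
case: (mxtens.mxtens_unindex x) => i k; case: (mxtens.mxtens_unindex y) => j l.
rewrite summxE !mxE !unbidxK /= big_ord1 !mxE /= !hpsi.
under [RHS]eq_bigr => p _ do rewrite !mxE big_ord1 !mxE !unbidxK /=.
rewrite conj_sum mulr_suml.
under [LHS]eq_bigr => a _ do rewrite mulr_sumr.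
rewrite pair_big /=; apply: eq_bigr => [[a b]] _ /=.
rewrite !rmorphM /= conjCK conj_toC toCM; ring.
Qed.


Lemma realign_pure d d' (psi : 'cV[C]_(d * d')) (U : 'M[C]_d) (sq : 'I_d -> R)
  (be : 'I_d -> 'cV[C]_d') :
  (forall i k, psi (bidx i k) 0 = \sum_a U i a * toC (sq a) * be a k 0) ->
  realign d d' (psi *m cadj psi) =
  \sum_(p : 'I_d * 'I_d) toC (sq p.1 * sq p.2) *:
     (prodv (col p.1 U) (conjv (col p.2 U)) *m cadj (prodv (conjv (be p.1)) (be p.2))).
Proof.
move=> hpsi; apply/matrixP => x y.
rewrite -[x]mxtens.mxtens_unindexK -[y]mxtens.mxtens_unindexK.
case: (mxtens.mxtens_unindex x) => i j; case: (mxtens.mxtens_unindex y) => k l.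
rewrite summxE !mxE !unbidxK /= big_ord1 !mxE /= !hpsi.
under [RHS]eq_bigr => p _ do rewrite !mxE big_ord1 !mxE !unbidxK /=.
rewrite conj_sum mulr_suml.
under [LHS]eq_bigr => a _ do rewrite mulr_sumr.
rewrite pair_big /=; apply: eq_bigr => [[a b]] _ /=.
rewrite !rmorphM /= !conjCK conj_toC toCM; ring.
Qed.
End L4.

Section L5.
Variable R : realType.
Local Notation C := R[i].

Lemma ens_trnorm a b n (K : finType) (Xs : 'I_n -> 'M[C]_(a, b)) (P : 'I_n -> R)
  (c : 'I_n -> K -> R) (u : 'I_n -> K -> 'cV[C]_a) (v : 'I_n -> K -> 'cV[C]_b) :
  (forall m, 0 <= P m) -> (forall m k, 0 <= c m k) ->
  (forall m k, nsq (u m k) <= 1) -> (forall m k, nsq (v m k) <= 1) ->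
  (forall m, Xs m = \sum_k toC (c m k) *: (u m k *m cadj (v m k))) ->
  trnorm (\sum_m toC (P m) *: Xs m) <= \sum_m P m * \sum_k c m k.
Proof.
move=> P0 c0 u1 v1 XE.
have -> : \sum_m P m * \sum_k c m k = \sum_(q : 'I_n * K) P q.1 * c q.1 q.2.
  under eq_bigr => m _ do rewrite mulr_sumr.
  by rewrite pair_big.
apply: (trnorm_le (c := fun q => P q.1 * c q.1 q.2)
   (u := fun q => u q.1 q.2) (v := fun q => v q.1 q.2)).
- by move=> q; rewrite mulr_ge0.
- by move=> q; apply: u1.
- by move=> q; apply: v1.
under eq_bigr => m _ do rewrite XE scaler_sumr.
rewrite pair_big /=; apply: eq_bigr => q _.
by rewrite scalerA toCM.
Qed.

Lemma ptransp_lin d d' n (P : 'I_n -> R) (M : 'I_n -> 'M[C]_(d * d')) :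
  ptransp d d' (\sum_m toC (P m) *: M m) = \sum_m toC (P m) *: ptransp d d' (M m).
Proof.
apply/matrixP => x y; rewrite !mxE !summxE; apply: eq_bigr => m _.
by rewrite !mxE.
Qed.

Lemma realign_lin d d' n (P : 'I_n -> R) (M : 'I_n -> 'M[C]_(d * d')) :
  realign d d' (\sum_m toC (P m) *: M m) = \sum_m toC (P m) *: realign d d' (M m).
Proof.
apply/matrixP => x y; rewrite !mxE !summxE; apply: eq_bigr => m _.
by rewrite !mxE.
Qed.

Lemma sqr_sum_pair d (sq : 'I_d -> R) :
  (\sum_a sq a) ^+ 2 = \sum_(p : 'I_d * 'I_d) sq p.1 * sq p.2.
Proof.
rewrite expr2 mulr_suml.
under eq_bigr => a _ do rewrite mulr_sumr.
by rewrite pair_big.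
Qed.

End L5.

Section L6.
Variable R : realType.
Local Notation ge := (fun x y : R => y <= x).

Lemma sum_nth_ord (G : R -> R) n (s : seq R) : G 0 = 0 -> (size s <= n)%N ->
  \sum_(i < n) G (nth 0 s i) = \sum_(x <- s) G x.
Proof.
move=> G0 hs; rewrite (big_nth 0) -(big_mkord xpredT (fun i => G (nth 0 s i))).
rewrite (big_cat_nat (leq0n _) hs) /= [X in _ + X]big1_seq ?addr0 //.
move=> i /andP [_]; rewrite mem_index_iota => /andP [hi _].
by rewrite nth_default.
Qed.

Lemma ge_total : total ge.
Proof. by move=> x y; rewrite orbC le_total. Qed.
Lemma ge_trans : transitive ge.
Proof. by move=> x y z h1 h2; apply: le_trans h2 h1. Qed.
Lemma ge_anti : antisymmetric ge.
Proof. by move=> x y /andP [h1 h2]; apply/eqP; rewrite eq_le h1 h2. Qed.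
Lemma ge_refl : reflexive ge.
Proof. by move=> x. Qed.

Lemma sum_ge0_seq (s : seq R) : all (fun x => 0 < x) s -> 0 <= \sum_(x <- s) x.
Proof.
move=> /allP h; rewrite big_seq; apply: sumr_ge0 => x /h; exact: ltW.
Qed.

Lemma partial_sum_le (s : seq R) k : all (fun x => 0 < x) s ->
  \sum_(i < k) nth 0 s i <= \sum_(x <- s) x.
Proof.
move=> hs.
have h0 i : 0 <= nth 0 s i.
  case: (ltnP i (size s)) => hi; last by rewrite nth_default.
  by apply: ltW; move/allP: hs; apply; apply: mem_nth.
rewrite -(sum_nth_ord (G := id) (n := maxn k (size s))) ?leq_maxr //.
rewrite -(big_mkord xpredT (fun i => nth 0 s i)).
rewrite -(big_mkord xpredT (fun i => nth 0 s i)).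
rewrite (big_cat_nat (leq0n k) (leq_maxl k (size s))) /= lerDl.
by apply: sumr_ge0 => i _.
Qed.

Lemma probvec1 : probvec [:: 1 : R].
Proof. by split; rewrite /= ?ltr01 // big_seq1. Qed.

Lemma s_ge0 (s : seq R -> R) :
  s [:: 1] = 0 ->
  (forall p q : seq R, probvec p -> probvec q -> majorizes q p -> s q <= s p) ->
  forall p, probvec p -> 0 <= s p.
Proof.
move=> s1 smaj p hp; rewrite -s1; apply: smaj => //; first exact: probvec1.
move=> [|k]; first by rewrite !big_ord0.
rewrite [X in _ <= X]big_ord_recl /= [X in _ <= _ + X]big1 ?addr0; last first.
  by move=> i _; rewrite nth_default.
case: hp => hpos [_ hsum]; rewrite -hsum; exact: partial_sum_le.
Qed.


Lemma sorted_map_ord ds (p : 'I_ds -> R) :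
  (forall i j : 'I_ds, (i <= j)%N -> p j <= p i) ->
  sorted ge [seq p i | i : 'I_ds].
Proof.
move=> hp; rewrite sorted_map.
have := iota_sorted 0 ds; rewrite -val_enum_ord sorted_map.
apply: sub_sorted => i j /=; exact: hp.
Qed.

Lemma filter_probvec ds y (p : 'I_ds -> R) : Fset ds y p ->
  probvec [seq x <- [seq p i | i : 'I_ds] | 0 < x].
Proof.
move=> [p0 [psum [pmon _]]]; split; first exact: filter_all.
split; first exact/sorted_filter/sorted_map_ord/pmon/ge_trans.
rewrite big_filter big_map big_enum_cond /= -psum [RHS](bigID (fun i => 0 < p i)) /=.
rewrite [X in _ = _ + X]big1 ?addr0 // => i.
by rewrite -leNgt => h; apply/eqP; rewrite eq_le h p0.
Qed.

Lemma fset_of_seq ds (es : seq R) : probvec es -> (size es <= ds)%N ->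
  Fset ds ((\sum_(x <- es) Num.sqrt x) ^+ 2) (fun i : 'I_ds => nth 0 es i) /\
  [seq x <- [seq nth 0 es i | i : 'I_ds] | 0 < x] = es.
Proof.
move=> [epos [esort esum]] hs.
have h0 i : 0 <= nth 0 es i.
  case: (ltnP i (size es)) => hi; last by rewrite nth_default.
  by apply: ltW; move/allP: epos; apply; apply: mem_nth.
split; first split => //.
  split; first by rewrite (sum_nth_ord (G := id)).
  split; last by rewrite (sum_nth_ord (G := Num.sqrt)) // sqrtr0.
  move=> i j hij; case: (ltnP j (size es)) => hj; last by rewrite nth_default.
  apply: (sorted_leq_nth ge_trans ge_refl) => //; rewrite inE //.
  exact: leq_ltn_trans hij hj.
have -> : [seq nth 0 es i | i : 'I_ds] = [seq nth 0 es k | k <- iota 0 ds].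
  by rewrite -val_enum_ord -map_comp.
rewrite -(subnKC hs) iotaD map_cat filter_cat.
have -> : [seq nth 0 es k | k <- iota 0 (size es)] = es by rewrite -/(mkseq _ _) mkseq_nth.
rewrite (all_filterP epos) -[RHS]cats0; congr (_ ++ _).
rewrite (@eq_in_filter _ _ pred0) ?filter_pred0 // => x /mapP [k hk ->] /=.
by rewrite nth_default ?ltxx //; move: hk; rewrite mem_iota add0n => /andP[].
Qed.

End L6.

Section L7.
Variable R : realType.
Local Open Scope classical_set_scope.

Lemma inf_ge0_gen (E : set R) : (forall y, E y -> 0 <= y) -> 0 <= inf E.
Proof.
move=> h; case: (pselect (exists y, E y)) => [ne|em].
  by apply: lb_le_inf => // y /h.
have -> : E = set0.
  by apply/seteqP; split => y // Ey; exfalso; apply: em; exists y.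
by rewrite inf0.
Qed.

Variable s : seq R -> R.
Hypothesis s1 : s [:: 1] = 0.
Hypothesis smaj : forall p q : seq R, probvec p -> probvec q -> majorizes q p -> s q <= s p.

Lemma fmin_ge0 ds y : 0 <= fmin s ds y.
Proof.
apply: inf_ge0_gen => _ [p hp <-].
exact/(s_ge0 s1 smaj)/filter_probvec/hp.
Qed.

Lemma fmin_le ds (es : seq R) : probvec es -> (size es <= ds)%N ->
  fmin s ds ((\sum_(x <- es) Num.sqrt x) ^+ 2) <= s es.
Proof.
move=> hes hs; have [hF hfil] := fset_of_seq hes hs.
apply: ge_inf.
  exists 0 => _ [p hp <-]; exact/(s_ge0 s1 smaj)/filter_probvec/hp.
by exists (fun i : 'I_ds => nth 0 es i) => //; rewrite hfil.
Qed.

Lemma fmin1 ds : (0 < ds)%N -> fmin s ds 1 <= 0.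
Proof.
move=> hds; rewrite -s1.
have := @fmin_le ds [:: 1] (probvec1 R) hds.
by rewrite big_seq1 sqrtr1 expr1n.
Qed.

Lemma sum_sqr_le n (a : 'I_n -> R) : (forall i, 0 <= a i) ->
  \sum_i a i ^+ 2 <= (\sum_i a i) ^+ 2.
Proof.
move=> a0; rewrite expr2 mulr_suml; apply: ler_sum => i _.
rewrite mulr_sumr (bigD1 i) //= expr2 lerDl.
by apply: sumr_ge0 => j _; rewrite mulr_ge0.
Qed.

Lemma sqr_sum_le n (a : 'I_n -> R) :
  (\sum_i a i) ^+ 2 <= n%:R * \sum_i a i ^+ 2.
Proof.
case: n a => [|n] a; first by rewrite !big_ord0 expr0n /= mul0r.
set S := \sum_i a i; set Q := \sum_i a i ^+ 2.
pose m := S / n.+1%:R.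
have npos : 0 < n.+1%:R :> R by rewrite ltr0n.
have hm : n.+1%:R * m = S by rewrite /m mulrC divfK // gt_eqF.
have h : 0 <= \sum_i (a i - m) ^+ 2 by apply: sumr_ge0 => i _; apply: sqr_ge0.
have E : \sum_i (a i - m) ^+ 2 = Q - S * m * 2 + n.+1%:R * m ^+ 2.
  under eq_bigr => i _ do rewrite sqrrB.
  rewrite big_split sumrB /= sumr_const card_ord.
  rewrite sumrMnl -mulr_suml -/Q -/S; ring.
rewrite E in h.
have h2 := mulr_ge0 (ltW npos) h.
have e2 : n.+1%:R * (Q - S * m * 2 + n.+1%:R * m ^+ 2) = n.+1%:R * Q - S ^+ 2.
  by rewrite -hm; ring.
rewrite e2 in h2; lra.
Qed.


Lemma fset_bounds ds y (p : 'I_ds -> R) : Fset ds y p -> 1 <= y <= ds%:R.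
Proof.
move=> [p0 [psum [_ <-]]].
have e : \sum_i Num.sqrt (p i) ^+ 2 = 1.
  by rewrite -psum; apply: eq_bigr => i _; rewrite sqr_sqrtr.
apply/andP; split.
  by rewrite -e; apply: sum_sqr_le => i; apply: sqrtr_ge0.
by have := sqr_sum_le (fun i => Num.sqrt (p i)); rewrite e mulr1.
Qed.

End L7.

Section L8.
Variable R : realType.
Local Open Scope classical_set_scope.

Lemma jensen (a b : R) (g : R -> R) n (P z : 'I_n -> R) :
  convex_on a b g -> (forall m, 0 <= P m) -> \sum_m P m = 1 ->
  (forall m, a <= z m <= b) ->
  g (\sum_m P m * z m) <= \sum_m P m * g (z m) /\ a <= \sum_m P m * z m <= b.
Proof.
move=> gc; elim: n P z => [|n IH] P z P0 P1 zab.
  by move: P1; rewrite big_ord0 => /eqP; rewrite eq_sym oner_eq0.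
move: P1; rewrite !big_ord_recr /=.
set t := P ord_max; set zt := z ord_max.
set Sp := \sum_(i < n) P (widen_ord (leqnSn n) i) => P1.
have Sp0 : 0 <= Sp by apply: sumr_ge0.
have t0 : 0 <= t := P0 _.
have zab' := zab ord_max; rewrite -/zt in zab'.
have [Sp_eq0|Sp_ne0] := eqVneq Sp 0.
  have Pz i : P (widen_ord (leqnSn n) i) = 0.
    by move/eqP: Sp_eq0; rewrite psumr_eq0 // => /allP /(_ i (mem_index_enum _)) /eqP.
  rewrite !big1 ?add0r; try by move=> i _; rewrite Pz mul0r.
  have -> : t = 1 by rewrite -P1 Sp_eq0 add0r.
  by rewrite !mul1r.
have Sp_pos : 0 < Sp by rewrite lt_def Sp_ne0.
pose P' i := P (widen_ord (leqnSn n) i) / Sp.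
have P'1 : \sum_i P' i = 1 by rewrite /P' -mulr_suml divff.
have [IH1 IH2] := IH P' (fun i => z (widen_ord (leqnSn n) i))
  (fun i => divr_ge0 (P0 _) Sp0) P'1 (fun i => zab _).
set w := \sum_i P' i * z (widen_ord (leqnSn n) i) in IH1 IH2.
have wE : \sum_(i < n) P (widen_ord (leqnSn n) i) * z (widen_ord (leqnSn n) i) = Sp * w.
  rewrite /w mulr_sumr; apply: eq_bigr => i _; rewrite /P' mulrA mulrCA divff //.
  by rewrite mulr1.
have gE : \sum_(i < n) P (widen_ord (leqnSn n) i) * g (z (widen_ord (leqnSn n) i)) =
    Sp * \sum_i P' i * g (z (widen_ord (leqnSn n) i)).
  rewrite mulr_sumr; apply: eq_bigr => i _; rewrite /P' mulrA mulrCA divff //.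
  by rewrite mulr1.
rewrite wE gE.
have SpE : Sp = 1 - t by rewrite -P1 addrK.
have ht : 0 <= t <= 1 by rewrite t0 /= -P1 lerDr.
split.
  rewrite addrC SpE.
  apply: le_trans (gc _ _ _ zab' IH2 ht) _.
  rewrite [X in X <= _]addrC lerD2r; apply: ler_wpM2l => //; by rewrite -SpE.
rewrite SpE; move: IH2 zab' ht => /andP [h1 h2] /andP [h3 h4] /andP [h5 h6].
apply/andP; split; nra.
Qed.

Lemma cohull_le (b : R) (F : R -> R) x (e : R) n (P z : 'I_n -> R) :
  (forall y, 1 <= y <= b -> 0 <= F y) -> F 1 <= 0 -> 0 <= e ->
  (forall m, 0 <= P m) -> \sum_m P m = 1 -> (forall m, 1 <= z m <= b) ->
  x <= \sum_m P m * z m -> \sum_m P m * F (z m) <= e -> co_hull 1 b F x <= e.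
Proof.
move=> F0 F1 e0 P0 P1 zab xle Fe.
rewrite /co_hull.
have [x1|x1] := ltP x 1.
  rewrite sup_out // => -[_ [M hM]].
  pose c := (Num.max 0 (M + 1)) / (1 - x).
  have c0 : 0 <= c by rewrite divr_ge0 // ?le_max ?lexx // subr_ge0 ltW.
  have : (fun y => c * (1 - y)) x <= M.
    apply: hM; exists (fun y => c * (1 - y)) => //; split.
      by move=> y1 y2 t _ _ _; rewrite le_eqVlt; apply/orP; left; apply/eqP; ring.
    move=> y /andP [y1 yb]; apply: le_trans (F0 y _); last by rewrite y1 yb.
    by rewrite mulr_ge0_le0 // subr_le0.
  rewrite /c /= divfK; last by rewrite subr_eq0 gt_eqF.
  have : M + 1 <= Num.max 0 (M + 1) by rewrite le_max lexx orbT.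
  lra.
apply: ge_sup.
  exists 0; exists (fun _ => 0) => //; split.
    by move=> *; rewrite !mulr0 addr0.
  by move=> y /F0.
move=> _ [g [gc gF] <-].
have [J1 J2] := jensen gc P0 P1 zab.
set w := \sum_m P m * z m in J1 J2 xle.
have gw : g w <= e.
  apply: le_trans J1 (le_trans _ Fe); apply: ler_sum => m _.
  by apply: ler_wpM2l => //; apply: gF.
have b1 : 1 <= b by case/andP: J2 => h1 h2; apply: le_trans h1 h2.
have g1 : g 1 <= 0 by apply: le_trans (gF 1 _) F1; rewrite lexx b1.
have [w1|w1] := leP w 1.
  have -> : x = 1 by apply/eqP; rewrite eq_le x1 andbT; apply: le_trans xle w1.
  exact: le_trans g1 e0.
pose t := (x - 1) / (w - 1).
have wpos : 0 < w - 1 by rewrite subr_gt0.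
have t0 : 0 <= t by rewrite divr_ge0 // ?subr_ge0 // ltW.
have t1 : t <= 1 by rewrite ler_pdivrMr // mul1r lerB.
have xE : t * w + (1 - t) * 1 = x.
  rewrite /t; field; by rewrite subr_eq0 gt_eqF.
have l1 : (1 : R) <= 1 <= b by rewrite lexx b1.
have t01 : (0 : R) <= t <= 1 by rewrite t0 t1.
have h := gc w 1 t J2 l1 t01.
rewrite xE in h.
apply: le_trans h _.
have h2 : t * g w <= t * e by apply: ler_wpM2l.
have h3 : (1 - t) * g 1 <= 0 by apply: mulr_ge0_le0; rewrite ?subr_ge0.
nra.
Qed.

End L8.

Section L9.
Variable R : realType.
Local Notation C := R[i].

Lemma sum_bidx d d' (F : 'I_(d * d') -> R) :
  \sum_x F x = \sum_i \sum_k F (bidx i k).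
Proof.
rewrite pair_big /=.
rewrite (reindex (fun p : 'I_d * 'I_d' => mxtens.mxtens_index p)) /=.
  by apply: eq_bigr => -[i k] _.
by exists (@mxtens.mxtens_unindex d d') => x _; rewrite (mxtens.mxtens_indexK, mxtens.mxtens_unindexK).
Qed.

Lemma le0toC (r : R) : (0 <= toC r) = (0 <= r).
Proof. by rewrite lecE /= eqxx. Qed.

Lemma tr_sim n (U : 'M[C]_n) (D : 'rV[C]_n) : cadj U *m U = 1%:M ->
  \tr (U *m diag_mx D *m cadj U) = \sum_i D 0 i.
Proof.
by move=> hU; rewrite mxtrace_mulC mulmxA hU mul1mx mxtrace_diag.
Qed.

Lemma pure_facts d d' (psi : 'cV[C]_(d * d')) (U : 'M[C]_d) (sq : 'I_d -> R) :
  unit_vec psi -> cadj U *m U = 1%:M ->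
  ptrB d d' (psi *m cadj psi) = U *m diag_mx (\row_a toC (sq a ^+ 2)) *m cadj U ->
  [/\ \sum_a sq a ^+ 2 = 1, density (ptrB d d' (psi *m cadj psi)) &
      eigvec (ptrB d d' (psi *m cadj psi)) =
        sort (fun x y : R => y <= x) [seq x <- [seq sq a ^+ 2 | a <- enum 'I_d] | 0 < x]].
Proof.
move=> hpsi hU hptr.
have trP : \tr (ptrB d d' (psi *m cadj psi)) = toC (nsq psi).
  rewrite /mxtrace /nsq sum_bidx toC_sum; apply: eq_bigr => i _.
  rewrite !mxE toC_sum; apply: eq_bigr => k _.
  by rewrite !mxE big_ord1 !mxE mul_conj.
have n1 : nsq psi = 1.
  by apply: toC_inj; rewrite -nsqE hpsi mxE.
have s1 : \sum_a sq a ^+ 2 = 1.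
  apply: toC_inj; rewrite -n1 -trP hptr tr_sim // toC_sum.
  by apply: eq_bigr => a _; rewrite mxE.
split => //.
  split; last by rewrite trP n1.
  split.
    by rewrite ptrB_pure /Defs.hermitian cadj_mul cadjK.
  move=> v; rewrite ptrB_pure.
  set P := psimat psi.
  have -> : cadj v *m (P *m cadj P) *m v = cadj (cadj P *m v) *m (cadj P *m v).
    by rewrite cadj_mul cadjK !mulmxA.
  by rewrite nsqE le0toC nsq_ge0.
rewrite /eigvec hptr; apply/perm_sortP.
- by move=> x y; rewrite orbC le_total.
- by move=> x y z h1 h2; apply: le_trans h2 h1.
- by move=> x y /andP [h1 h2]; apply/eqP; rewrite eq_le h1 h2.
apply: perm_filter.
have := perm_map (@complex.Re R) (spec_herm (\row_a toC (sq a ^+ 2)) hU).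
by rewrite -map_comp; under [X in perm_eq _ X]eq_map => a do rewrite /= mxE ReC.
Qed.


Lemma ens_exists d d' (rho : 'M[C]_(d * d')) : density rho ->
  exists n (P : 'I_n -> R) (psi : 'I_n -> 'cV[C]_(d * d')), ensemble_of rho P psi.
Proof.
move=> [[hh hpsd] htr].
have [U [D [hU1 hU2 hE]]] := herm_spec hh.
have Dpos a : 0 <= D 0 a.
  have := hpsd (col a U).
  have -> : cadj (col a U) *m rho *m col a U = ((cadj U *m rho *m U) a a)%:M.
    apply/matrixP => i j; rewrite !ord1 !mxE eqxx mulr1n.
    by apply: eq_bigr => k _; rewrite !mxE; congr (_ * _); apply: eq_bigr => l _; rewrite !mxE.
  rewrite mxE eqxx mulr1n.
  by rewrite hE !mulmxA hU1 mul1mx -mulmxA hU1 mulmx1 mxE eqxx mulr1n.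
have DE a : D 0 a = toC (complex.Re (D 0 a)).
  move: (Dpos a); rewrite lecE /= => /andP [/eqP hi _].
  by case: (D 0 a) hi => x y /= ->.
exists (d * d')%N, (fun a => complex.Re (D 0 a)), (fun a => col a U).
split.
  by move=> a; move: (Dpos a); rewrite lecE /= => /andP [].
split.
  apply: toC_inj; rewrite toC_sum.
  have -> : toC 1 = \tr rho by rewrite htr.
  rewrite hE tr_sim //.
  by apply: eq_bigr => a _; rewrite -DE.
split.
  move=> a; apply/matrixP => i j; rewrite !ord1 !mxE eqxx mulr1n.
  transitivity ((cadj U *m U) a a).
    by rewrite [RHS]mxE; apply: eq_bigr => k _; rewrite !mxE.
  by rewrite hU1 mxE eqxx.
rewrite [RHS]hE; apply/matrixP => i j; rewrite summxE !mxE.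
apply: eq_bigr => a _; rewrite !mxE big_ord1 !mxE -DE.
rewrite (bigD1 a) //= big1 ?addr0.
  by rewrite !mxE eqxx mulr1n; ring.
by move=> b hb; rewrite mxE (negPf hb) mulr0n mulr0.
Qed.
End L9.

Section L10.
Variable R : realType.

Lemma es_facts d (sq : 'I_d -> R) ds : (forall a, 0 <= sq a) ->
  \sum_a sq a ^+ 2 = 1 -> (#|[set a | sq a != 0%R]| <= ds)%N ->
  let es := sort (fun x y : R => y <= x)
              [seq x <- [seq sq a ^+ 2 | a <- enum 'I_d] | 0 < x] in
  [/\ probvec es, (size es <= ds)%N & \sum_(x <- es) Num.sqrt x = \sum_a sq a].
Proof.
move=> sq0 s1 hc es.
have ps : perm_eq es [seq x <- [seq sq a ^+ 2 | a <- enum 'I_d] | 0 < x].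
  by rewrite /es perm_sort.
have pos a : (0 < sq a ^+ 2) = (sq a != 0).
  by rewrite lt_def sqr_ge0 andbT sqrf_eq0.
split.
- split; first by rewrite all_sort; apply: filter_all.
  split; first by apply: sort_sorted => x y; rewrite orbC le_total.
  rewrite (perm_big _ ps) big_filter big_map big_enum_cond /= -s1.
  rewrite [RHS](bigID (fun a => 0 < sq a ^+ 2)) /= [X in _ = _ + X]big1 ?addr0 //.
  by move=> a; rewrite pos negbK => /eqP ->; rewrite expr0n.
- rewrite size_sort size_filter count_map.
  apply: leq_trans hc; rewrite -sum1_count big_enum_cond /= sum1_card cardsE.
  by apply/eq_leq/eq_card => a; exact: (pos a).
- rewrite (perm_big _ ps) big_filter big_map big_enum_cond /=.
  rewrite [RHS](bigID (fun a => 0 < sq a ^+ 2)) /= [X in _ = _ + X]big1 ?addr0.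
    by apply: eq_bigr => a _; rewrite sqrtr_sqr ger0_norm.
  by move=> a; rewrite pos negbK => /eqP.
Qed.

End L10.

Local Open Scope classical_set_scope.

Theorem proposition4 (R : realType)
  (S : forall n : nat, 'M[R[i]]_n -> R) (s : seq R -> R)
  (S_nonneg : forall n (rho : 'M[R[i]]_n), density rho -> 0 <= S n rho)
  (S_concave : forall n (rho sigma : 'M[R[i]]_n) (t : R),
      density rho -> density sigma -> 0 <= t <= 1 ->
      t * S n rho + (1 - t) * S n sigma
        <= S n (toC t *: rho + toC (1 - t) *: sigma))
  (S_pure : forall n (rho : 'M[R[i]]_n), pure_state rho -> S n rho = 0)
  (S_spec : forall n (rho : 'M[R[i]]_n), density rho -> S n rho = s (eigvec rho))
  (s_one : s [:: 1] = 0)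
  (s_maj : forall p q : seq R, probvec p -> probvec q -> majorizes q p -> s q <= s p)
  (d d' : nat) (hd : (0 < d)%N) (hd' : (0 < d')%N)
  (rho : 'M[R[i]]_(d * d')) (hrho : density rho) :
  co_hull 1 (minn d d')%:R (fmin s (minn d d'))
      (Num.max (trnorm (ptransp d d' rho)) (trnorm (realign d d' rho)))
    <= Ecr S d d' rho.
Proof.
set ds := minn d d'.
have ds0 : (0 < ds)%N by rewrite leq_min hd hd'.
rewrite /Ecr; apply: lb_le_inf.
  have [n [P [psi hens]]] := ens_exists hrho.
  by eexists; exists n, P, psi; split; first exact: hens.
move=> _ [n [P [psi [[P0 [P1 [hunit hsum]]] ->]]]].
have hdec : forall m, exists t : 'M[R[i]]_d * ('I_d -> R) * ('I_d -> 'cV[R[i]]_d'),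
  [/\ cadj t.1.1 *m t.1.1 = 1%:M, t.1.1 *m cadj t.1.1 = 1%:M,
      [/\ forall a, 0 <= t.1.2 a, forall a, nsq (t.2 a) <= 1 &
          (#|[set a | t.1.2 a != 0%R]%SET| <= d')%N],
      (forall i k, psi m (bidx i k) 0 = \sum_a t.1.1 i a * toC (t.1.2 a) * t.2 a k 0) &
      ptrB d d' (psi m *m cadj (psi m)) =
        t.1.1 *m diag_mx (\row_a toC (t.1.2 a ^+ 2)) *m cadj t.1.1].
  move=> m; have [U [sq [be H]]] := pure_decomp (psi m); exists (U, sq, be); exact: H.
have [f hf] := choice hdec.
pose U m := (f m).1.1; pose sq m := (f m).1.2; pose be m := (f m).2.
have hU1 m : cadj (U m) *m U m = 1%:M by have [? ? [? ? ?] ? ?] := hf m.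
have hsq0 m a : 0 <= sq m a by have [? ? [h ? ?] ? ?] := hf m; apply: h.
have hbe m a : nsq (be m a) <= 1 by have [? ? [? h ?] ? ?] := hf m; apply: h.
have hcnt m : (#|[set a | sq m a != 0%R]%SET| <= d')%N by have [? ? [? ? ?] ? ?] := hf m.
have hpsi m : forall i k, psi m (bidx i k) 0 = \sum_a U m i a * toC (sq m a) * be m a k 0.
  by have [? ? [? ? ?] h ?] := hf m; apply: h.
have hptr m : ptrB d d' (psi m *m cadj (psi m)) =
    U m *m diag_mx (\row_a toC (sq m a ^+ 2)) *m cadj (U m) by have [? ? [? ? ?] ? ?] := hf m.
pose es m := sort (fun x y : R => y <= x)
              [seq x <- [seq sq m a ^+ 2 | a <- enum 'I_d] | 0 < x].
pose z m := (\sum_a sq m a) ^+ 2.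
have hfacts m := pure_facts (hunit m) (hU1 m) (hptr m).
have hSm m : S d (ptrB d d' (psi m *m cadj (psi m))) = s (es m).
  by case: (hfacts m) => _ hden heig; rewrite S_spec // heig.
have hes m : [/\ probvec (es m), (size (es m) <= ds)%N &
                \sum_(x <- es m) Num.sqrt x = \sum_a sq m a].
  case: (hfacts m) => s1 _ _; apply: es_facts => //.
  rewrite leq_min hcnt andbT; apply: leq_trans (max_card _) _; by rewrite card_ord.
have zE m : z m = (\sum_(x <- es m) Num.sqrt x) ^+ 2.
  by case: (hes m) => _ _ ->.
have hz m : 1 <= z m <= ds%:R.
  case: (hes m) => hp hsz _; have [hF _] := fset_of_seq hp hsz.
  by rewrite zE; exact: fset_bounds hF.
have hFz m : fmin s ds (z m) <= s (es m).
  by case: (hes m) => hp hsz _; rewrite zE; apply: fmin_le.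
have hx : Num.max (trnorm (ptransp d d' rho)) (trnorm (realign d d' rho))
    <= \sum_m P m * z m.
  have zpair m : z m = \sum_(p : 'I_d * 'I_d) sq m p.1 * sq m p.2.
    by rewrite /z sqr_sum_pair.
  under eq_bigr => m _ do rewrite zpair.
  rewrite ge_max; apply/andP; split.
    rewrite -hsum ptransp_lin.
    apply: (ens_trnorm (c := fun m p => sq m p.1 * sq m p.2)
      (u := fun m p => prodv (col p.1 (U m)) (conjv (be m p.2)))
      (v := fun m p => prodv (col p.2 (U m)) (conjv (be m p.1)))) => //.
    - by move=> m p; apply: mulr_ge0.
    - by move=> m p; rewrite nsq_prodv nsq_colU // nsq_conjv mul1r.
    - by move=> m p; rewrite nsq_prodv nsq_colU // nsq_conjv mul1r.
    - by move=> m; apply: ptransp_pure.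
  rewrite -hsum realign_lin.
  apply: (ens_trnorm (c := fun m p => sq m p.1 * sq m p.2)
    (u := fun m p => prodv (col p.1 (U m)) (conjv (col p.2 (U m))))
    (v := fun m p => prodv (conjv (be m p.1)) (be m p.2))) => //.
  - by move=> m p; apply: mulr_ge0.
  - by move=> m p; rewrite nsq_prodv nsq_colU // nsq_conjv nsq_colU // mul1r.
  - move=> m p; rewrite nsq_prodv nsq_conjv.
    have := hbe m p.1; have := hbe m p.2; have := nsq_ge0 (be m p.1).
    have := nsq_ge0 (be m p.2); nra.
  - by move=> m; apply: realign_pure.
apply: (cohull_le (z := z) (P := P)) => //.
- by move=> y _; apply: (fmin_ge0 s_one s_maj).
- exact: (fmin1 s_one s_maj ds0).
- apply: sumr_ge0 => m _; apply: mulr_ge0 => //; rewrite hSm.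
  by case: (hes m) => hp _ _; apply: (s_ge0 s_one s_maj).
- apply: ler_sum => m _; apply: ler_wpM2l => //; rewrite hSm; exact: hFz.
Qed.
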